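(* Suppose an $N\times N$ Hadamard matrix exists for some positive integer $N$. Then for every integer $k\ge 0$ and every positive integer $M\le 2^kN$, there exists an equal norm tight integer frame (ENTIF) with $2^kN$ elements in $\mathcal{H}_M$.
   Context: An $N\times N$ Hadamard matrix is a matrix $H$ with all entries in $\{1,-1\}$ satisfying $H^TH=N I_N$. $\mathcal{H}_M$ is the real $M$-dimensional Hilbert space, identified with $\mathbb{R}^M$ via a fixed orthonormal basis. An ENTIF with $N$ elements in $\mathcal{H}_M$ is a family of $N$ vectors with integer coordinates that forms a frame for $\mathbb{R}^M$ which is tight and equal norm; equivalently, an $M\times N$ integer matrix $A$ of rank $M$ with $AA^T=\lambda I_M$ for some $\lambda>0$ and all columns of the same Euclidean norm. *)

(* Defs.v *)
From mathcomp Require Import all_boot all_order all_algebra.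
Set Implicit Arguments. Unset Strict Implicit. Unset Printing Implicit Defensive.
Import Order.TTheory GRing.Theory Num.Theory.
Local Open Scope ring_scope.

Definition is_hadamard (N : nat) (H : 'M[int]_N) : Prop :=
  (forall i j, H i j = 1 \/ H i j = -1) /\ H^T *m H = (N%:R : int)%:M.

Definition col_sqnorm (M K : nat) (A : 'M[int]_(M, K)) (j : 'I_K) : int :=
  \sum_(i < M) A i j ^+ 2.

(* An ENTIF with K elements in H_M (identified with R^M): an M x K integer
   matrix whose columns are the frame vectors, of rank M (computed over Q,
   equivalently over R), with A A^T = lambda I_M for some lambda > 0 and all
   columns of the same Euclidean norm. *)
Definition is_ENTIF (M K : nat) (A : 'M[int]_(M, K)) : Prop :=
  \rank (map_mx (fun z : int => z%:~R : rat) A) = M /\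
  (exists lambda : int, 0 < lambda /\ A *m A^T = lambda%:M) /\
  (forall j k : 'I_K, col_sqnorm A j = col_sqnorm A k).

(* Main.v *)
Require Import Defs.
From mathcomp Require Import all_boot all_order all_algebra.
Local Open Scope ring_scope.
Import GRing.Theory Num.Theory.

Lemma had_double (n : nat) (H : 'M[int]_n) :
  is_hadamard H -> is_hadamard (block_mx H H H (- H)).
Proof.
case=> Hpm HH; split.
  move=> i j; rewrite -[i]splitK -[j]splitK.
  case: (split i) => a; case: (split j) => b;
    rewrite ?block_mxEul ?block_mxEur ?block_mxEdl ?block_mxEdr ?mxE //;
    case: (Hpm a b) => ->; auto.
rewrite tr_block_mx mulmx_block.
have tN : (- H)^T = - H^T by apply/matrixP=> a b; rewrite !mxE.
rewrite tN !mulmxN !mulNmx opprK HH (scalar_mx_block n n).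
congr block_mx; apply/matrixP=> a b; rewrite !mxE ?natrD ?mulrnDl ?subrr //.
Qed.

Lemma had_exists (N : nat) : (exists H : 'M[int]_N, is_hadamard H) ->
  forall k, exists H : 'M[int]_(2 ^ k * N), is_hadamard H.
Proof.
move=> hN; elim=> [|k [H hH]]; first by rewrite expn0 mul1n.
have -> : (2 ^ k.+1 * N = 2 ^ k * N + 2 ^ k * N)%N by rewrite expnS -mulnA mul2n -addnn.
by exists (block_mx H H H (- H)); apply: had_double.
Qed.

Theorem theorem3p5 (N : nat) :
  (0 < N)%N ->
  (exists H : 'M[int]_N, is_hadamard H) ->
  forall (k M : nat), (0 < M)%N -> (M <= 2 ^ k * N)%N ->
    exists A : 'M[int]_(M, 2 ^ k * N), is_ENTIF A.
Proof.
move=> N0 hN k M M0 le.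
have [H [Hpm HH]] := had_exists _ hN k.
set K := (2 ^ k * N)%N in H Hpm HH le *.
have K0 : (0 < K)%N by rewrite /K muln_gt0 expn_gt0.
pose A := \matrix_(i < M, j < K) H j (widen_ord le i).
have AA : A *m A^T = (K%:R : int)%:M.
  apply/matrixP=> i i'; rewrite !mxE.
  have := congr1 (fun X : 'M[int]_K => X (widen_ord le i) (widen_ord le i')) HH.
  rewrite /= !mxE => <-.
  by apply: eq_bigr => j _; rewrite !mxE.
exists A; split; last split.
- pose B := map_mx (fun z : int => z%:~R : rat) A.
  apply/eqP; rewrite eqn_leq rank_leq_row /=.
  have BB : B *m B^T = (K%:R : rat)%:M.
    have -> : B *m B^T = map_mx (fun z : int => z%:~R : rat) (A *m A^T).
      by rewrite map_mxM map_trmx.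
    rewrite AA; apply/matrixP=> i j; rewrite !mxE.
    case: (i == j); rewrite /= ?mulr1n ?mulr0n //.
    by rewrite GRing.rmorph_nat.
  apply: (@mulmx1_min_rank _ _ _ _ B 1%:M (B^T *m (K%:R^-1 : rat)%:M)).
  rewrite mul1mx mulmxA BB mul_scalar_mx scale_scalar_mx mulfV //.
  by rewrite pnatr_eq0 -lt0n.
- exists (K%:R); split; last exact: AA.
  by rewrite ltr0n.
- move=> j j'; rewrite /col_sqnorm.
  have E : forall j, \sum_(i < M) A i j ^+ 2 = M%:R.
    move=> j0; rewrite (eq_bigr (fun _ => 1)) ?sumr_const ?card_ord //.
    by move=> i _; rewrite mxE; case: (Hpm j0 (widen_ord le i)) => ->.
  by rewrite !E.
Qed.
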